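(* Let $q\in(0,1]$. Assume [A7$'$]: for some $R>0$, (i) for every $T\in\mathbb T$, $\mathbb H_T$ is almost surely thrice differentiable in $\theta$ on $B=\{\theta\in\Theta:|\theta-\theta^*|<R\}$; (ii) $\|a_T\|\partial_\theta\mathbb H_T(\theta^* )=O_p(1)$; (iii) $\|a_T\|^2\sup_{\theta\in B}|\partial_\theta^2\mathbb H_T(\theta)|=O_p(1)$; (iv) $\|a_T\|^2\sup_{\theta\in B}|\partial_\theta^3\mathbb H_T(\theta)|=O_p(1)$. Then the following hold: [A8] for all $M>0$, $\sup_{u\in\mathbb U_T,\ |u|<M}|\mathbb H_T(\theta^*+a_Tu)-\mathbb H_T(\theta^* )|=O_p(1)$ as $T\to\infty$; [A9] for all $M>0$, $\sup_{u,v\in\mathbb U_T,\ |u|,|v|<M,\ u\ne v}\frac{|\mathbb H_T(\theta^*+a_Tu)-\mathbb H_T(\theta^*+a_Tv)|}{|u-v|^q}=O_p(1)$ as $T\to\infty$.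
   Context: Let $\Theta\subset\mathbb R^{\mathsf p}$ be a bounded open set with closure $\overline\Theta$ and $\theta^*\in\Theta$. Let $(\Omega,\mathcal F,P)$ be a probability space, $\mathbb T\subset\mathbb R_{\ge0}$ with $\sup\mathbb T=\infty$; limits $T\to\infty$ are along $\mathbb T$. For each $T\in\mathbb T$, $\mathbb H_T:\Omega\times\overline\Theta\to\mathbb R$ is a random field continuous in $\theta$ for every $\omega$. $a_T$ is a deterministic invertible diagonal $\mathsf p\times\mathsf p$ matrix with $\|a_T\|\to0$ ($\|\cdot\|$ the spectral norm), and $\mathbb U_T=\{u\in\mathbb R^{\mathsf p}:\theta^*+a_Tu\in\overline\Theta\}$. $\partial_\theta^k\mathbb H_T$ is the $k$-th derivative tensor in $\theta$. $X_T=O_p(1)$ means tightness: for every $\epsilon>0$ there are $\mathcal T\in\mathbb T$, $M>0$ with $P(|X_T|>M)<\epsilon$ for $T\ge\mathcal T$. *)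

(* Defs.v *)
From HB Require Import structures.
From mathcomp Require Import all_boot all_order all_algebra.
From mathcomp Require Import all_classical all_reals all_analysis.
Set Implicit Arguments. Unset Strict Implicit. Unset Printing Implicit Defensive.
Import Order.TTheory GRing.Theory Num.Theory.
Import numFieldNormedType.Exports.
Local Open Scope classical_set_scope.
Local Open Scope ring_scope.

Section Defs.
Variable R : realType.

Definition enorm (p : nat) (x : 'rV[R]_p) : R :=
  Num.sqrt (\sum_(i < p) x ord0 i ^+ 2).

Definition specnorm (p : nat) (A : 'M[R]_p) : R :=
  sup [set enorm (u *m A) | u in [set u : 'rV[R]_p | enorm u <= 1]].

Definition ebasis (p : nat) (i : 'I_p) : 'rV[R]_p := delta_mx ord0 i.

Definition partial (p : nat) (f : 'rV[R]_p -> R) (i : 'I_p) : 'rV[R]_p -> R :=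
  fun th => 'D_(ebasis i) f th.

Definition d1norm (p : nat) (f : 'rV[R]_p -> R) (th : 'rV[R]_p) : R :=
  Num.sqrt (\sum_(i < p) (partial f i th) ^+ 2).
Definition d2norm (p : nat) (f : 'rV[R]_p -> R) (th : 'rV[R]_p) : R :=
  Num.sqrt (\sum_(i < p) \sum_(j < p) (partial (partial f i) j th) ^+ 2).
Definition d3norm (p : nat) (f : 'rV[R]_p -> R) (th : 'rV[R]_p) : R :=
  Num.sqrt (\sum_(i < p) \sum_(j < p) \sum_(k < p)
     (partial (partial (partial f i) j) k th) ^+ 2).

Definition thrice_diff_on (p : nat) (f : 'rV[R]_p -> R) (B : set 'rV[R]_p) : Prop :=
  forall th, B th ->
    [/\ differentiable f th,
        (forall i, differentiable (partial f i) th) &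
        (forall i j, differentiable (partial (partial f i) j) th)].

Definition outer_lt (d : measure_display) (Omega : measurableType d)
  (P : probability Omega R) (A : set Omega) (eps : R) : Prop :=
  exists E, [/\ measurable E, A `<=` E & (P E < eps%:E)%E].

(* "sup S_T(omega) = O_p(1)" along Tset, for families of sets of nonnegative
   reals: sup S > K iff some element of S exceeds K. *)
Definition OpSup (d : measure_display) (Omega : measurableType d)
  (P : probability Omega R) (Tset : set R) (S : R -> Omega -> set R) : Prop :=
  forall eps : R, 0 < eps ->
    exists T0, Tset T0 /\ exists K : R, 0 < K /\
      forall T, Tset T -> T0 <= T ->
        outer_lt P [set w | exists x, S T w x /\ K < x] eps.

Definition Op1 (d : measure_display) (Omega : measurableType d)
  (P : probability Omega R) (Tset : set R) (X : R -> Omega -> R) : Prop :=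
  OpSup P Tset (fun T w => [set `|X T w|]).

End Defs.

(* Main.v *)
Require Import Defs.
From HB Require Import structures.
From mathcomp Require Import all_boot all_order all_algebra.
From mathcomp Require Import all_classical all_reals all_analysis.
From mathcomp Require Import ring lra.
Import Order.TTheory GRing.Theory Num.Theory.
Import numFieldNormedType.Exports.
Local Open Scope classical_set_scope.
Local Open Scope ring_scope.
Section S.
Variable R : realType.

Lemma line_fun p (f : 'rV[R]_p -> R) (y v : 'rV[R]_p) (t : R) :
  (fun h : R => h^-1 *: (((fun s : R => f (y + s *: v)) \o shift t) (h *: 1) - f (y + t *: v)))
  = (fun h : R => h^-1 *: ((f \o shift (y + t *: v)) (h *: v) - f (y + t *: v))).
Proof.
apply/funext => h /=; congr (_ *: (f _ - _)).
rewrite /shift /= -[h%:A]/(h * 1) mulr1 scalerDl addrCA addrA; reflexivity.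
Qed.

Lemma line_derivable p (f : 'rV[R]_p -> R) (y v : 'rV[R]_p) (t : R) :
  differentiable f (y + t *: v) ->
  is_derive t 1 (fun s : R => f (y + s *: v)) (\sum_k v 0 k * partial f k (y + t *: v)).
Proof.
move=> df.
have dv : derivable (fun s : R => f (y + s *: v)) t 1.
  by rewrite /derivable line_fun; exact: (diff_derivable (v:=v) df).
have -> : \sum_k v 0 k * partial f k (y + t *: v) = 'D_1 (fun s : R => f (y + s *: v)) t.
  rewrite /derive line_fun -/(derive f _ v) deriveE //.
  set z := y + t *: v.
  rewrite [X in 'd f z X](row_sum_delta v) linear_sum.
  apply: eq_bigr => k _; rewrite linearZ /= /partial deriveE //.
by apply: derivableP.
Qed.

Lemma seg_bound p (f : 'rV[R]_p -> R) (x y : 'rV[R]_p) (C : R) (m : R) :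
  0 <= m ->
  (forall t, 0 <= t <= 1 -> differentiable f (y + t *: (x - y))) ->
  (forall t, 0 <= t <= 1 ->
     m * \sum_k `|(x - y) 0 k| * `|partial f k (y + t *: (x - y))| <= C) ->
  m * `|f x - f y| <= C.
Proof.
move=> m0 df hC; set v := x - y.
have hd (t : R) : 0 <= t <= 1 -> is_derive t 1 (fun s : R => f (y + s *: v))
    (\sum_k v 0 k * partial f k (y + t *: v)).
  by move=> /df; apply: line_derivable.
have [c hc E] : exists2 c, c \in `]0, 1[ &
   (fun s : R => f (y + s *: v)) 1 - (fun s : R => f (y + s *: v)) 0 =
   (\sum_k v 0 k * partial f k (y + c *: v)) * (1 - 0).
  apply: (@MVT _ (fun s : R => f (y + s *: v)) (fun c => \sum_k v 0 k * partial f k (y + c *: v)) 0 1) => //.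
    move=> t; rewrite in_itv /= => /andP[t0 t1].
    by apply: hd; rewrite !ltW.
  apply: continuous_subspace_itv => t; rewrite in_itv /= => ht.
  have := hd t ht => /(@ex_derive _ _ _ _ _ _ _) /derivable1_diffP.
  by move/differentiable_continuous.
move: hc; rewrite in_itv /= => /andP[c0 c1].
move: E; rewrite /= scale1r scale0r addr0 /v [y + _]addrC subrK subr0 mulr1 => ->.
apply: le_trans (hC c _); last by rewrite !ltW.
apply: ler_wpM2l => //.
apply: le_trans (ler_norm_sum _ _ _) _.
by apply: ler_sum => k _; rewrite normrM.
Qed.

Lemma diag_coord p (A : 'M[R]_p) (w : 'rV[R]_p) k :
  is_diag_mx A -> (w *m A) 0 k = w 0 k * A k k.
Proof.
move=> /is_diag_mxP dA; rewrite mxE (bigD1 k) //= big1 ?addr0 // => i ik.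
by rewrite dA ?mulr0 //.
Qed.

Lemma sqr_le_sum (I : finType) (F : I -> R) i : F i ^+ 2 <= \sum_j F j ^+ 2.
Proof.
rewrite (bigD1 i) //= lerDl; apply: sumr_ge0 => j _; exact: sqr_ge0.
Qed.

Lemma abs_le_sqrt_sum (I : finType) (F : I -> R) i :
  `|F i| <= Num.sqrt (\sum_j F j ^+ 2).
Proof.
rewrite -sqrtr_sqr ler_sqrt ?sqr_le_sum //; apply: sumr_ge0 => j _; exact: sqr_ge0.
Qed.

Lemma coord_le_enorm p (w : 'rV[R]_p) k : `|w 0 k| <= enorm w.
Proof.
rewrite /enorm -sqrtr_sqr ler_sqrt; last by apply: sumr_ge0 => j _; exact: sqr_ge0.
exact: (sqr_le_sum _ (fun j => w ord0 j) k).
Qed.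

Lemma enorm_ge0 p (w : 'rV[R]_p) : 0 <= enorm w.
Proof. exact: sqrtr_ge0. Qed.

Lemma enorm_coord_bound p (w : 'rV[R]_p) c :
  0 <= c -> (forall k, `|w 0 k| <= c) -> enorm w <= p%:R * c.
Proof.
move=> c0 hw; rewrite /enorm -(ger0_norm (mulr_ge0 (ler0n _ p) c0)) -sqrtr_sqr.
rewrite ler_sqrt ?sqr_ge0 //.
apply: (@le_trans _ _ (\sum_(k < p) c ^+ 2)).
  apply: ler_sum => k _; rewrite -real_normK ?num_real //.
  by rewrite lerXn2r ?nnegrE ?hw.
rewrite sumr_const card_ord exprMn -[c ^+ 2 *+ p]mulr_natl ler_wpM2r ?sqr_ge0 // -natrX ler_nat.
case: p {w hw} => [//|n].
by rewrite -[X in (X <= _)%N]muln1 expnS leq_mul2l /= expn_gt0.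
Qed.

Lemma enorm_sub_le p (u v : 'rV[R]_p) M :
  enorm u <= M -> enorm v <= M -> enorm (u - v) <= 2 * M.
Proof.
move=> hu hv.
have M0 : 0 <= M by apply: le_trans hu; exact: enorm_ge0.
rewrite /enorm -(ger0_norm (mulr_ge0 (ler0n _ 2) M0)) -sqrtr_sqr.
rewrite ler_sqrt ?sqr_ge0 //.
have hu2 : \sum_k u 0 k ^+ 2 <= M ^+ 2.
  rewrite -(ger0_norm M0) -sqrtr_sqr in hu.
  by rewrite -ler_sqrt ?sqr_ge0 // sqrtr_sqr ger0_norm.
have hv2 : \sum_k v 0 k ^+ 2 <= M ^+ 2.
  rewrite -(ger0_norm M0) -sqrtr_sqr in hv.
  by rewrite -ler_sqrt ?sqr_ge0 // sqrtr_sqr ger0_norm.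
apply: (@le_trans _ _ (\sum_k (2 * (u 0 k ^+ 2 + v 0 k ^+ 2)))).
  apply: ler_sum => k _; rewrite !mxE.
  have := sqr_ge0 (u 0 k + v 0 k); nra.
rewrite -mulr_sumr big_split /=.
have : 2 * (\sum_k u 0 k ^+ 2 + \sum_k v 0 k ^+ 2) <= 2 * (M ^+ 2 + M ^+ 2).
  by rewrite ler_wpM2l // lerD.
move/le_trans; apply; rewrite exprMn; nra.
Qed.

Lemma mxnorm_coord p (w : 'rV[R]_p) c :
  0 <= c -> (forall k, `|w 0 k| <= c) -> `|w| <= c.
Proof.
move=> c0 hw; rewrite /Num.norm /= mx_normrE.
apply: bigmax_le => // [[i j]] _ /=; by rewrite (ord1 i) hw.
Qed.

Lemma diag_has_sup p (A : 'M[R]_p) : is_diag_mx A ->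
  has_sup [set enorm (u *m A) | u in [set u : 'rV[R]_p | enorm u <= 1]].
Proof.
move=> dA.
split.
  exists (enorm (0 *m A)), 0 => //=.
  by rewrite /enorm big1 ?sqrtr0 // => j _; rewrite mxE expr0n.
exists (Num.sqrt (\sum_j A j j ^+ 2)) => _ [u /= hu <-].
rewrite /enorm ler_sqrt; last by apply: sumr_ge0 => j _; exact: sqr_ge0.
apply: ler_sum => j _; rewrite diag_coord // exprMn ler_piMl ?sqr_ge0 //.
have := le_trans (coord_le_enorm _ u j) hu.
rewrite -real_normK ?num_real // => h.
by rewrite -(expr1n _ 2) lerXn2r ?nnegrE.
Qed.

Lemma specnorm_ge0 p (A : 'M[R]_p) : is_diag_mx A -> 0 <= specnorm A.
Proof.
move=> dA; apply: (sup_upper_bound (diag_has_sup _ _ dA)).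
exists 0; last by rewrite mul0mx /enorm big1 ?sqrtr0 // => j _; rewrite mxE expr0n.
by rewrite /= /enorm big1 ?sqrtr0 // => j _; rewrite mxE expr0n.
Qed.

Lemma diag_le_specnorm p (A : 'M[R]_p) k :
  is_diag_mx A -> `|A k k| <= specnorm A.
Proof.
move=> dA; have hs := diag_has_sup _ _ dA.
have h1 := coord_le_enorm _ (@ebasis R _ k *m A) k.
rewrite diag_coord // /ebasis mxE !eqxx mul1r in h1.
apply: le_trans h1 _.
apply: sup_upper_bound => //; exists (@ebasis R _ k) => //=.
rewrite /enorm (bigD1 k) //= big1 ?addr0.
  by rewrite /ebasis mxE !eqxx /= expr1n sqrtr1.
by move=> j jk; rewrite /ebasis mxE eqxx /= (negbTE jk) expr0n.
Qed.


Lemma le_sum_nonneg (I : finType) (G : I -> R) i :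
  (forall j, 0 <= G j) -> G i <= \sum_j G j.
Proof. by move=> h; rewrite (bigD1 i) //= lerDl sumr_ge0. Qed.

Lemma d1_coord p (f : 'rV[R]_p -> R) th j : `|partial f j th| <= d1norm f th.
Proof.
rewrite /d1norm -sqrtr_sqr ler_sqrt; last by apply: sumr_ge0 => i _; exact: sqr_ge0.
exact: (sqr_le_sum _ (fun i => partial f i th) j).
Qed.

Lemma d2_coord p (f : 'rV[R]_p -> R) th j k :
  `|partial (partial f j) k th| <= d2norm f th.
Proof.
rewrite /d2norm -sqrtr_sqr ler_sqrt; last first.
  by apply: sumr_ge0 => i _; apply: sumr_ge0 => i' _; exact: sqr_ge0.
apply: le_trans (sqr_le_sum _ (fun i => partial (partial f j) i th) k) _.
apply: (le_sum_nonneg _ (fun i => \sum_(i' < p) partial (partial f i) i' th ^+ 2) j).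
by move=> i; apply: sumr_ge0 => i' _; exact: sqr_ge0.
Qed.

Lemma cube_seg p (th0 x y : 'rV[R]_p) c t :
  0 <= t <= 1 ->
  (forall k, `|x 0 k - th0 0 k| <= c) -> (forall k, `|y 0 k - th0 0 k| <= c) ->
  forall k, `|(y + t *: (x - y)) 0 k - th0 0 k| <= c.
Proof.
move=> /andP[t0 t1] hx hy k; rewrite !mxE.
have -> : y 0 k + t * (x 0 k - y 0 k) - th0 0 k =
  (1 - t) * (y 0 k - th0 0 k) + t * (x 0 k - th0 0 k) by ring.
apply: le_trans (ler_normD _ _) _.
rewrite !normrM (ger0_norm t0) ger0_norm ?subr_ge0 //.
have := hx k; have := hy k; nra.
Qed.
Arguments cube_seg [p] th0 [x y c t].

Lemma main_bound p (Hf : 'rV[R]_p -> R) (th0 : 'rV[R]_p) (A : 'M[R]_p)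
  (B : set 'rV[R]_p) (s M K1 K2 : R) :
  is_diag_mx A -> 0 < M -> (forall k, `|A k k| <= s) ->
  (forall z : 'rV[R]_p, (forall k, `|z 0 k - th0 0 k| <= M * s) -> B z) ->
  thrice_diff_on Hf B ->
  s * d1norm Hf th0 <= K1 ->
  (forall th, B th -> s ^+ 2 * d2norm Hf th <= K2) ->
  forall u v, enorm u < M -> enorm v < M ->
  `|Hf (th0 + u *m A) - Hf (th0 + v *m A)| <=
     p%:R * enorm (u - v) * (K1 + p%:R * M * K2).
Proof.
move=> dA M0 hs hB hd hK1 hK2 u v hu hv.
have Bth0 (k : 'I_p) : 0 <= s by apply: le_trans (normr_ge0 _) (hs k).
have cube0 : forall k, `|th0 0 k - th0 0 k| <= M * s.
  by move=> k; rewrite subrr normr0; apply: mulr_ge0; [apply: ltW | apply: Bth0 k].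
have K2ge0 : 0 <= K2.
  apply: le_trans (hK2 _ (hB _ cube0)).
  by rewrite mulr_ge0 ?sqr_ge0 ?sqrtr_ge0.
have step1 : forall z : 'rV[R]_p, (forall k, `|z 0 k - th0 0 k| <= M * s) ->
    forall j, s * `|partial Hf j z| <= K1 + p%:R * M * K2.
  move=> z hz j.
  have s0 := Bth0 j.
  have hseg := seg_bound _ (partial Hf j) z th0 (p%:R * (M * s) * K2) (s ^+ 2) (sqr_ge0 s).
  have h2 : s ^+ 2 * `|partial Hf j z - partial Hf j th0| <= p%:R * (M * s) * K2.
    apply: hseg.
      move=> t ht; have [_ hd2 _] := hd _ (hB _ (cube_seg th0 ht hz cube0)).
      exact: hd2.
    move=> t ht; rewrite mulr_sumr.
    have -> : p%:R * (M * s) * K2 = \sum_(k < p) (M * s) * K2.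
      by rewrite sumr_const card_ord -[RHS]mulr_natl !mulrA.
    apply: ler_sum => k _.
    rewrite mulrCA; apply: ler_pM.
    - exact: normr_ge0.
    - by rewrite mulr_ge0 ?sqr_ge0.
    - by have := hz k; rewrite !mxE.
    apply: le_trans (hK2 _ (hB _ (cube_seg th0 ht hz cube0))).
    by rewrite ler_wpM2l ?sqr_ge0 ?d2_coord.
  have h3 : s * `|partial Hf j z - partial Hf j th0| <= p%:R * M * K2.
    case: (eqVneq s 0) => [->|sn0]; first by rewrite mul0r; apply: mulr_ge0 => //; apply: mulr_ge0 => //; apply: ltW.
    have sp : 0 < s by rewrite lt_def sn0.
    rewrite -(ler_pM2l sp) mulrA -expr2; apply: le_trans h2 _.
    by have -> : p%:R * (M * s) * K2 = s * (p%:R * M * K2) by ring.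
  have e : partial Hf j z = partial Hf j th0 + (partial Hf j z - partial Hf j th0).
    by rewrite addrC subrK.
  rewrite e; apply: le_trans (ler_wpM2l s0 (ler_normD _ _)) _.
  rewrite mulrDr lerD //; apply: le_trans hK1.
  by rewrite ler_wpM2l ?d1_coord.
have cu : forall k, `|(th0 + u *m A) 0 k - th0 0 k| <= M * s.
  move=> k; rewrite mxE addrC addKr diag_coord // normrM.
  apply: ler_pM; [exact: normr_ge0 | exact: normr_ge0 | | exact: hs].
  by apply: ltW; apply: le_lt_trans hu; apply: coord_le_enorm.
have cv : forall k, `|(th0 + v *m A) 0 k - th0 0 k| <= M * s.
  move=> k; rewrite mxE addrC addKr diag_coord // normrM.
  apply: ler_pM; [exact: normr_ge0 | exact: normr_ge0 | | exact: hs].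
  by apply: ltW; apply: le_lt_trans hv; apply: coord_le_enorm.
have := seg_bound _ Hf (th0 + u *m A) (th0 + v *m A)
          (p%:R * enorm (u - v) * (K1 + p%:R * M * K2)) 1 ler01.
rewrite mul1r; apply.
  move=> t ht; have [hd1 _ _] := hd _ (hB _ (cube_seg th0 ht cu cv)).
  exact: hd1.
move=> t ht; rewrite mul1r.
have -> : p%:R * enorm (u - v) * (K1 + p%:R * M * K2) =
   \sum_(k < p) enorm (u - v) * (K1 + p%:R * M * K2).
  by rewrite sumr_const card_ord -[RHS]mulr_natl !mulrA.
apply: ler_sum => k _.
have E : (th0 + u *m A - (th0 + v *m A)) = (u - v) *m A.
  by rewrite mulmxBl opprD addrACA subrr add0r.
rewrite E.
rewrite diag_coord // normrM -[`|(u - v) 0 k| * _ * _]mulrA.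
apply: ler_pM.
- exact: normr_ge0.
- by rewrite mulr_ge0.
- exact: coord_le_enorm.
apply: le_trans (step1 _ (cube_seg th0 ht cu cv) k).
by rewrite E ler_wpM2r // hs.
Qed.

Lemma pow_part (D e C M q : R) : 0 < q -> q <= 1 -> 0 <= e -> e <= 2 * M ->
  0 <= C -> D <= C * e -> D / powR e q <= C * powR (2 * M) (1 - q).
Proof.
move=> q0 q1 e0 eM C0 hD.
have hq0 : q != 0 by rewrite gt_eqF.
have rhs0 : 0 <= C * powR (2 * M) (1 - q) by rewrite mulr_ge0 ?powR_ge0.
case: (eqVneq e 0) => [->|en0].
  by rewrite powR0 // invr0 mulr0.
have ep : 0 < e by rewrite lt_def en0.
have eE : e = powR e q * powR e (1 - q).
  rewrite -powRD; last by rewrite en0 implybT.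
  by rewrite addrC subrK powRr1.
have hq : 0 < powR e q by apply: powR_gt0.
apply: (@le_trans _ _ (C * e / powR e q)).
  by rewrite ler_wpM2r // invr_ge0 ltW.
have -> : C * e / powR e q = C * powR e (1 - q).
  rewrite {1}eE; field; by rewrite gt_eqF.
rewrite ler_wpM2l // (ge0_ler_powR (r := 1 - q)) ?nnegrE ?subr_ge0 //.
by apply: le_trans eM.
Qed.

End S.
Theorem proposition3
  (R : realType) (p : nat)
  (Theta : set 'rV[R]_p) (thstar : 'rV[R]_p)
  (d : measure_display) (Omega : measurableType d) (P : probability Omega R)
  (Tset : set R)
  (H : R -> Omega -> 'rV[R]_p -> R)
  (a : R -> 'M[R]_p)
  (q : R) :
  (* Theta bounded open, thstar in Theta *)
  open Theta ->
  (exists C : R, forall th, Theta th -> enorm th <= C) ->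
  Theta thstar ->
  (* the time set *)
  (forall T, Tset T -> 0 <= T) ->
  (forall C : R, exists T, Tset T /\ C < T) ->
  (* H_T is a random field on closure Theta, continuous in theta *)
  (forall T, Tset T -> forall th, closure Theta th ->
     measurable_fun setT (fun w => H T w th)) ->
  (forall T, Tset T -> forall w, {within closure Theta, continuous (H T w)}) ->
  (* a_T deterministic invertible diagonal with ||a_T|| -> 0 *)
  (forall T, Tset T -> is_diag_mx (a T) /\ a T \in unitmx) ->
  (forall e : R, 0 < e -> exists T0, Tset T0 /\
     forall T, Tset T -> T0 <= T -> specnorm (a T) < e) ->
  (* q in (0,1] *)
  0 < q -> q <= 1 ->
  (* [A7'] *)
  (exists Rr : R, 0 < Rr /\
    let B := [set th | Theta th /\ enorm (th - thstar) < Rr] in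
    [/\ (forall T, Tset T -> exists N, [/\ measurable N, (P N = 0)%E &
            [set w | ~ thrice_diff_on (H T w) B] `<=` N]),
        Op1 P Tset (fun T w => specnorm (a T) * d1norm (H T w) thstar),
        OpSup P Tset (fun T w =>
          [set specnorm (a T) ^+ 2 * d2norm (H T w) th | th in B]) &
        OpSup P Tset (fun T w =>
          [set specnorm (a T) ^+ 2 * d3norm (H T w) th | th in B])]) ->
  (* [A8] *)
  (forall M : R, 0 < M ->
     OpSup P Tset (fun T w =>
       [set `|H T w (thstar + u *m a T) - H T w thstar|
          | u in [set u | closure Theta (thstar + u *m a T) /\ enorm u < M]])) /\
  (* [A9] *)
  (forall M : R, 0 < M ->
     OpSup P Tset (fun T w =>
       [set x | exists u v : 'rV[R]_p,
          [/\ closure Theta (thstar + u *m a T), closure Theta (thstar + v *m a T),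
              enorm u < M, enorm v < M & u != v] /\
          x = `|H T w (thstar + u *m a T) - H T w (thstar + v *m a T)|
                / powR (enorm (u - v)) q])).
Proof.
move=> Hopen _ Hth _ _ _ _ Ha Hs q0 q1 [Rr [Rr0 HA]].
move: HA; set B := [set th | Theta th /\ enorm (th - thstar) < Rr] => -[hN hO1 hO2 _].
have [r r0 hr] : exists2 r : R, 0 < r &
    forall z : 'rV[R]_p, `|thstar - z| < r -> Theta z.
  have := open_nbhs_nbhs (conj Hopen Hth) => /nbhs_ballP [r r0 hr].
  exists r => // z hz; apply: hr; rewrite -ball_normE /=. exact: hz.
have core : forall M : R, 0 < M -> forall eps : R, 0 < eps ->
  exists T0, Tset T0 /\ exists Cst : R, 0 <= Cst /\
    forall T, Tset T -> T0 <= T -> exists E, [/\ measurable E, (P E < eps%:E)%E &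
      forall w, ~ E w -> forall u v : 'rV[R]_p, enorm u < M -> enorm v < M ->
        `|H T w (thstar + u *m a T) - H T w (thstar + v *m a T)| <=
          p%:R * enorm (u - v) * Cst].
  move=> M M0 eps eps0.
  have e2 : 0 < eps / 2 by rewrite divr_gt0.
  have [T1 [hT1 [K1 [K1pos hK1]]]] := hO1 _ e2.
  have [T2 [hT2 [K2 [K2pos hK2]]]] := hO2 _ e2.
  pose e := Num.min (r / M) (Rr / ((p%:R + 1) * M)).
  have ep : 0 < e by rewrite lt_min !divr_gt0 ?mulr_gt0 // ltr_wpDl.
  have [T3 [hT3 hs3]] := Hs e ep.
  pose T0 := Num.max T1 (Num.max T2 T3).
  have hT0 : Tset T0.
    rewrite /T0; case: (leP T1 (Num.max T2 T3)) => _ //.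
    by case: (leP T2 T3).
  exists T0; split => //; exists (K1 + p%:R * M * K2); split.
    by apply: addr_ge0; [apply: ltW | rewrite !mulr_ge0 // ltW].
  move=> T hT hTT.
  have le1 : T1 <= T by apply: le_trans hTT; rewrite le_max lexx.
  have le2 : T2 <= T by apply: le_trans hTT; rewrite !le_max lexx orbT.
  have le3 : T3 <= T by apply: le_trans hTT; rewrite !le_max lexx !orbT.
  have [E1 [mE1 sE1 PE1]] := hK1 T hT le1.
  have [E2 [mE2 sE2 PE2]] := hK2 T hT le2.
  have [N [mN PN sN]] := hN T hT.
  exists (E1 `|` E2 `|` N); split.
  - by apply: measurableU => //; apply: measurableU.
  - apply: (le_lt_trans (measureU2 P (measurableU _ _ mE1 mE2) mN)).
    set Z := (X in (_ + X < _)%E); have -> : Z = 0%E by exact: PN.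
    rewrite adde0.
    apply: (le_lt_trans (measureU2 P mE1 mE2)).
    by rewrite [eps]splitr EFinD; apply: lteD.
  move=> w nE u v hu hv.
  have nE1 : ~ E1 w by move=> h; apply: nE; left; left.
  have nE2 : ~ E2 w by move=> h; apply: nE; left; right.
  have nN : ~ N w by move=> h; apply: nE; right.
  have [dA _] := Ha T hT.
  set s := specnorm (a T).
  have s0 : 0 <= s by apply: specnorm_ge0.
  have hse : s < e by apply: hs3.
  have c0 : 0 <= M * s by apply: mulr_ge0 => //; apply: ltW.
  have cr : M * s < r.
    have : s < r / M by apply: lt_le_trans hse _; rewrite ge_min lexx.
    by rewrite ltr_pdivlMr // mulrC.
  have cR : p%:R * (M * s) < Rr.
    have : s < Rr / ((p%:R + 1) * M) by apply: lt_le_trans hse _; rewrite ge_min lexx orbT.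
    rewrite ltr_pdivlMr ?mulr_gt0 ?ltr_wpDl // => h.
    apply: le_lt_trans h; nra.
  apply: (main_bound _ _ (H T w) thstar (a T) B s M K1 K2) => //.
  - by move=> k; apply: diag_le_specnorm.
  - move=> z hz; split.
      apply: hr; apply: le_lt_trans cr.
      by apply: mxnorm_coord => // k; rewrite !mxE distrC.
    apply: le_lt_trans cR.
    by apply: enorm_coord_bound => // k; rewrite !mxE.
  - by apply: contrapT => nt; apply: nN; apply: sN.
  - rewrite leNgt; apply/negP => lt; apply: nE1; apply: sE1.
    exists `|s * d1norm (H T w) thstar|; split => //.
    by apply: lt_le_trans lt (ler_norm _).
  - move=> th Bth; rewrite leNgt; apply/negP => lt; apply: nE2; apply: sE2.
    by exists (s ^+ 2 * d2norm (H T w) th); split => //; exists th.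
have en0 : enorm (0 : 'rV[R]_p) = 0.
  by rewrite /enorm big1 ?sqrtr0 // => j _; rewrite mxE expr0n.
have p0 : 0 <= (p%:R : R) by [].
split=> M M0 eps eps0.
  have [T0 [hT0 [Cst [C0 hC]]]] := core M M0 eps eps0.
  have hK : 0 <= p%:R * M * Cst by rewrite !mulr_ge0 // ltW.
  exists T0; split => //; exists (p%:R * M * Cst + 1); split; first by lra.
  move=> T hT hTT; have [E [mE PE hE]] := hC T hT hTT.
  exists E; split => // w [x [[u [_ hu] <-] Kx]].
  apply: contrapT => nE.
  have := hE w nE u 0 hu; rewrite en0 => /(_ M0).
  rewrite mul0mx addr0 subr0 => hb.
  have : p%:R * enorm u * Cst <= p%:R * M * Cst.
    by rewrite ler_wpM2r // ler_wpM2l // ltW.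
  move: Kx hb; lra.
have [T0 [hT0 [Cst [C0 hC]]]] := core M M0 eps eps0.
have hK : 0 <= p%:R * Cst * powR (2 * M) (1 - q) by rewrite !mulr_ge0 // powR_ge0.
exists T0; split => //; exists (p%:R * Cst * powR (2 * M) (1 - q) + 1); split; first by lra.
move=> T hT hTT; have [E [mE PE hE]] := hC T hT hTT.
exists E; split => // w [x [[u [v [[_ _ hu hv _] ->]]] Kx]].
apply: contrapT => nE.
have hb := hE w nE u v hu hv.
have := pow_part _ `|H T w (thstar + u *m a T) - H T w (thstar + v *m a T)|
  (enorm (u - v)) (p%:R * Cst) M q q0 q1 (enorm_ge0 _ _ (u - v))
  (enorm_sub_le _ _ _ _ _ (ltW hu) (ltW hv)) (mulr_ge0 p0 C0).
have hb' : `|H T w (thstar + u *m a T) - H T w (thstar + v *m a T)| <= p%:R * Cst * enorm (u - v).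
  by apply: le_trans hb _; rewrite mulrAC.
move=> /(_ hb'); move: Kx; lra.
Qed.
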